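(* For every $\lambda\in(0,\infty)$ and $\xi\in\{0,1\}^E$, the series below converges absolutely and \[ \frac{\lambda}{N+\lambda}\sum_{n=0}^\infty\Big(\frac N{N+\lambda}\Big)^n\frac1NS_\xi\big(L_0^n(J)\big)=p_1(\xi)^2+\frac1NS_\xi\left(\frac{2(I-Q)(\lambda+2-2Q)^{-1}}{\lambda\,\mathrm{tr}\big((\lambda+2-2Q)^{-1}\big)}\right). \]
   Context: $E$ is a finite set with $N=\#E>8$ elements, listed in a fixed order; $\mathsf M_E$ is the space of complex $N\times N$ matrices indexed by $E\times E$. $Q$ is an irreducible stochastic matrix on $E$ with $Q(x,y)=Q(y,x)$ for all $x,y$ and $\mathrm{tr}(Q)=0$. $I$ is the identity, $J$ the matrix with all entries $1/N$, and $(\lambda+2-2Q)^{-1}$ the inverse of $(\lambda+2)I-2Q$. For $\xi\in\{0,1\}^E$ regarded as a vector, $S_\xi(C)=\langle\xi|C|\xi\rangle=\sum_{x,y}\xi(x)C(x,y)\xi(y)$, and $p_1(\xi)=\frac1N\sum_{x\in E}\xi(x)$. The linear operator $L_0:\mathsf M_E\to\mathsf M_E$ is $L_0(C)=\frac{N-2}NC+\frac1N(CQ+QC)-\frac{2\,\mathrm{tr}(C)}{N^2}Q+\frac{2\,\mathrm{tr}(C)}{N^2}I$, and $L_0^n$ is its $n$-fold composition. *)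

(* Defs.v *)
From Stdlib Require Import Reals.
Open Scope R_scope.

(* E is identified with {0,...,N-1}; matrices are functions nat -> nat -> R,
   only the entries with indices < N are relevant. *)
Definition Mat := nat -> nat -> R.

Fixpoint rsum (n : nat) (f : nat -> R) : R :=
  match n with O => 0 | S k => rsum k f + f k end.

Definition mmul (N : nat) (A B : Mat) : Mat :=
  fun i j => rsum N (fun k => A i k * B k j).

Fixpoint mpow (N : nat) (A : Mat) (n : nat) : Mat :=
  match n with
  | O => fun i j => if Nat.eqb i j then 1 else 0
  | S k => mmul N (mpow N A k) A
  end.

Definition Idm : Mat := fun i j => if Nat.eqb i j then 1 else 0.

Definition Jm (N : nat) : Mat := fun _ _ => / INR N.

Definition mtr (N : nat) (C : Mat) : R := rsum N (fun x => C x x).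

Definition stochastic (N : nat) (Q : Mat) : Prop :=
  (forall x y, (x < N)%nat -> (y < N)%nat -> 0 <= Q x y) /\
  (forall x, (x < N)%nat -> rsum N (fun y => Q x y) = 1).

Definition irreducible (N : nat) (Q : Mat) : Prop :=
  forall x y, (x < N)%nat -> (y < N)%nat -> exists n, 0 < mpow N Q n x y.

Definition symmetric (N : nat) (Q : Mat) : Prop :=
  forall x y, (x < N)%nat -> (y < N)%nat -> Q x y = Q y x.

Definition L0 (N : nat) (Q : Mat) (C : Mat) : Mat :=
  fun i j =>
    (INR N - 2) / INR N * C i j
    + / INR N * (mmul N C Q i j + mmul N Q C i j)
    - 2 * mtr N C / (INR N ^ 2) * Q i j
    + 2 * mtr N C / (INR N ^ 2) * Idm i j.

Fixpoint L0pow (N : nat) (Q : Mat) (n : nat) (C : Mat) : Mat :=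
  match n with O => C | S k => L0 N Q (L0pow N Q k C) end.

Definition b2R (b : bool) : R := if b then 1 else 0.

Definition Sxi (N : nat) (xi : nat -> bool) (C : Mat) : R :=
  rsum N (fun x => rsum N (fun y => b2R (xi x) * C x y * b2R (xi y))).

Definition p1 (N : nat) (xi : nat -> bool) : R :=
  / INR N * rsum N (fun x => b2R (xi x)).

Definition Aλ (lam : R) (Q : Mat) : Mat :=
  fun i j => (lam + 2) * Idm i j - 2 * Q i j.

Definition is_inverse (N : nat) (A M : Mat) : Prop :=
  forall i j, (i < N)%nat -> (j < N)%nat ->
    mmul N A M i j = Idm i j /\ mmul N M A i j = Idm i j.

(* Main.v *)
Require Import Defs.
From Stdlib Require Import Reals Lra Lia Psatz FunctionalExtensionality.
Open Scope R_scope.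

Lemma rsum_ext n f g : (forall i, (i < n)%nat -> f i = g i) -> rsum n f = rsum n g.
Proof. induction n; simpl; intros H; auto. rewrite IHn by (intros; apply H; lia). rewrite H by lia. auto. Qed.

Lemma rsum_plus n f g : rsum n (fun i => f i + g i) = rsum n f + rsum n g.
Proof. induction n; simpl; [ring| rewrite IHn; ring]. Qed.

Lemma rsum_scal n c f : rsum n (fun i => c * f i) = c * rsum n f.
Proof. induction n; simpl; [ring| rewrite IHn; ring]. Qed.

Lemma rsum_lin n a b f g : rsum n (fun i => a * f i + b * g i) = a * rsum n f + b * rsum n g.
Proof. rewrite rsum_plus, !rsum_scal. auto. Qed.

Lemma rsum_const n c : rsum n (fun _ => c) = INR n * c.
Proof. induction n; simpl rsum; [simpl; ring| rewrite IHn, S_INR; ring]. Qed.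

Lemma rsum_zero n : rsum n (fun _ => 0) = 0.
Proof. rewrite rsum_const; ring. Qed.

Lemma rsum_le n f g : (forall i, (i<n)%nat -> f i <= g i) -> rsum n f <= rsum n g.
Proof. induction n; simpl; intros H; [lra|]. pose proof (H n ltac:(lia)).
  assert (rsum n f <= rsum n g) by (apply IHn; intros; apply H; lia). lra. Qed.

Lemma rsum_nonneg n f : (forall i, (i<n)%nat -> 0 <= f i) -> 0 <= rsum n f.
Proof. intros H. rewrite <- (rsum_zero n). apply rsum_le; auto. Qed.

Lemma rsum_abs n f : Rabs (rsum n f) <= rsum n (fun i => Rabs (f i)).
Proof. induction n; simpl. rewrite Rabs_R0; lra.
  eapply Rle_trans. apply Rabs_triang. lra. Qed.

Lemma rsum_swap n m f : rsum n (fun i => rsum m (fun j => f i j)) = rsum m (fun j => rsum n (fun i => f i j)).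
Proof. induction n; simpl.
  - rewrite rsum_zero; auto.
  - rewrite IHn, <- rsum_plus. auto. Qed.

Lemma rsum_single_le n f i : (forall k, (k<n)%nat -> 0 <= f k) -> (i<n)%nat -> f i <= rsum n f.
Proof. induction n; intros H Hi; [lia|]. simpl.
  destruct (Nat.eq_dec i n).
  - subst. assert (0 <= rsum n f) by (apply rsum_nonneg; intros; apply H; lia). lra.
  - assert (f i <= rsum n f) by (apply IHn; [intros; apply H; lia| lia]).
    pose proof (H n ltac:(lia)). lra. Qed.

Lemma Idm_same i : Idm i i = 1.
Proof. unfold Idm. rewrite Nat.eqb_refl. auto. Qed.
Lemma Idm_diff i j : i <> j -> Idm i j = 0.
Proof. intros H. unfold Idm. apply Nat.eqb_neq in H. rewrite H. auto. Qed.

Lemma rsum_delta_l n j f : (j < n)%nat -> rsum n (fun k => Idm j k * f k) = f j.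
Proof. induction n; intros Hj; [lia|]. simpl.
  destruct (Nat.eq_dec j n).
  - subst. rewrite (rsum_ext _ _ (fun _ => 0)). rewrite rsum_zero, Idm_same. ring.
    intros. rewrite Idm_diff by lia. ring.
  - rewrite IHn by lia. rewrite Idm_diff by lia. ring. Qed.

Lemma rsum_delta_r n j f : (j < n)%nat -> rsum n (fun k => f k * Idm k j) = f j.
Proof. intros Hj. rewrite <- (rsum_delta_l n j f Hj). apply rsum_ext. intros.
  unfold Idm. rewrite Nat.eqb_sym. ring. Qed.

Definition mlin (a : R) (C : Mat) (b : R) (D : Mat) : Mat := fun i j => a * C i j + b * D i j.

Lemma mmul_mlin_l N a C b D E i j : mmul N (mlin a C b D) E i j = a * mmul N C E i j + b * mmul N D E i j.
Proof. unfold mmul, mlin. rewrite <- rsum_lin. apply rsum_ext; intros; ring. Qed.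
Lemma mmul_mlin_r N a C b D E i j : mmul N E (mlin a C b D) i j = a * mmul N E C i j + b * mmul N E D i j.
Proof. unfold mmul, mlin. rewrite <- rsum_lin. apply rsum_ext; intros; ring. Qed.
Lemma mtr_mlin N a C b D : mtr N (mlin a C b D) = a * mtr N C + b * mtr N D.
Proof. unfold mtr, mlin. rewrite <- rsum_lin. auto. Qed.

Lemma L0_mlin N Q a C b D : L0 N Q (mlin a C b D) = mlin a (L0 N Q C) b (L0 N Q D).
Proof. apply functional_extensionality; intro i; apply functional_extensionality; intro j.
  unfold L0 at 1. rewrite !mmul_mlin_l, !mmul_mlin_r, mtr_mlin. unfold mlin, L0. unfold Rdiv. ring. Qed.

Lemma L0pow_mlin N Q n a C b D : L0pow N Q n (mlin a C b D) = mlin a (L0pow N Q n C) b (L0pow N Q n D).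
Proof. induction n; simpl; auto. rewrite IHn. apply L0_mlin. Qed.

Lemma L0pow_succ N Q n C : L0pow N Q n (L0 N Q C) = L0pow N Q (S n) C.
Proof. induction n; simpl; auto. rewrite IHn. auto. Qed.

Lemma Sxi_mlin N xi a C b D : Sxi N xi (mlin a C b D) = a * Sxi N xi C + b * Sxi N xi D.
Proof. unfold Sxi. rewrite <- rsum_lin. apply rsum_ext; intros.
  rewrite <- rsum_lin. apply rsum_ext; intros. unfold mlin; ring. Qed.

Definition eqN (N : nat) (C D : Mat) := forall i j, (i<N)%nat -> (j<N)%nat -> C i j = D i j.

Lemma L0_eqN N Q C D : eqN N C D -> eqN N (L0 N Q C) (L0 N Q D).
Proof. intros H i j Hi Hj. unfold L0.
  assert (mmul N C Q i j = mmul N D Q i j) as E1 by (apply rsum_ext; intros; rewrite H; auto).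
  assert (mmul N Q C i j = mmul N Q D i j) as E2 by (apply rsum_ext; intros; rewrite H; auto).
  assert (mtr N C = mtr N D) as E3 by (apply rsum_ext; intros; rewrite H; auto).
  rewrite E1, E2, E3, H; auto. Qed.

Lemma L0pow_eqN N Q n C D : eqN N C D -> eqN N (L0pow N Q n C) (L0pow N Q n D).
Proof. induction n; simpl; auto. intros; apply L0_eqN; auto. Qed.

Lemma Sxi_eqN N xi C D : eqN N C D -> Sxi N xi C = Sxi N xi D.
Proof. intros H. unfold Sxi. apply rsum_ext; intros. apply rsum_ext; intros. rewrite H; auto. Qed.

Lemma b2R_bound b : 0 <= b2R b <= 1.
Proof. destruct b; simpl; lra. Qed.

Lemma Sxi_bound N xi C B : (forall i j, (i<N)%nat -> (j<N)%nat -> Rabs (C i j) <= B) ->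
  Rabs (Sxi N xi C) <= INR N * (INR N * B).
Proof. intros H. unfold Sxi. eapply Rle_trans. apply rsum_abs.
  rewrite <- rsum_const. apply rsum_le. intros.
  eapply Rle_trans. apply rsum_abs. rewrite <- rsum_const. apply rsum_le. intros.
  specialize (H i i0 H0 H1). pose proof (Rabs_pos (C i i0)).
  destruct (xi i), (xi i0); simpl; rewrite ?Rmult_1_l, ?Rmult_1_r, ?Rmult_0_l, ?Rmult_0_r, ?Rabs_R0; lra. Qed.

Lemma mmul_Idm_l N C i j : (i<N)%nat -> mmul N Idm C i j = C i j.
Proof. intros; unfold mmul; apply (rsum_delta_l N i (fun k => C k j)); auto. Qed.
Lemma mmul_Idm_r N C i j : (j<N)%nat -> mmul N C Idm i j = C i j.
Proof. intros; unfold mmul; apply (rsum_delta_r N j (fun k => C i k)); auto. Qed.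

Definition Pm N Q := mlin ((INR N - 2)/INR N) Idm (2/INR N) Q.
Definition Dm N C := mlin 1 C (- (mtr N C / INR N)) Idm.
Definition fro N (C : Mat) := rsum N (fun i => rsum N (fun j => C i j ^ 2)).
Definition Mop N Q D : Mat := fun i j => / 2 * (mmul N (Pm N Q) D i j + mmul N D (Pm N Q) i j).

Lemma fro_nonneg N C : 0 <= fro N C.
Proof. apply rsum_nonneg; intros; apply rsum_nonneg; intros. nra. Qed.

Lemma fro_entry N A i j : (i<N)%nat -> (j<N)%nat -> A i j ^ 2 <= fro N A.
Proof. intros. unfold fro. eapply Rle_trans; [| apply (rsum_single_le _ _ i)].
  apply (rsum_single_le N (fun j => A i j ^ 2)); auto; intros; nra.
  intros; apply rsum_nonneg; intros; nra. auto. Qed.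

Lemma fro_eqN N A B : eqN N A B -> fro N A = fro N B.
Proof. intros H; unfold fro; apply rsum_ext; intros; apply rsum_ext; intros; rewrite H; auto. Qed.

Lemma jensen n p x : (forall k, (k<n)%nat -> 0 <= p k) -> rsum n p = 1 ->
  (rsum n (fun k => p k * x k)) ^ 2 <= rsum n (fun k => p k * x k ^ 2).
Proof. intros Hp Hs. set (m := rsum n (fun k => p k * x k)).
  assert (0 <= rsum n (fun k => p k * (x k - m) ^ 2)) as H.
  { apply rsum_nonneg; intros i Hi. apply Rmult_le_pos; [auto| apply pow2_ge_0]. }
  rewrite (rsum_ext _ _ (fun k => (p k * x k ^ 2 + (-2*m) * (p k * x k)) + m^2 * p k)) in H
    by (intros; ring).
  rewrite rsum_plus, rsum_plus, rsum_scal, rsum_scal, Hs in H. fold m in H. nra. Qed.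

Section Bounds.
Variable N : nat.
Variable Q : Mat.
Hypothesis HN : (2 < N)%nat.
Hypothesis Hst : stochastic N Q.
Hypothesis Hsym : symmetric N Q.

Lemma INR_N_pos : 0 < INR N.
Proof. apply lt_0_INR; lia. Qed.
Lemma INR_N_gt2 : 2 < INR N.
Proof. replace 2 with (INR 2) by (simpl; ring). apply lt_INR; lia. Qed.

Lemma Q_colsum y : (y<N)%nat -> rsum N (fun x => Q x y) = 1.
Proof. intros. destruct Hst as [_ Hr]. rewrite <- (Hr y H). apply rsum_ext; intros; apply Hsym; auto. Qed.

Lemma P_nonneg i k : (i<N)%nat -> (k<N)%nat -> 0 <= Pm N Q i k.
Proof. intros. unfold Pm, mlin. pose proof INR_N_gt2. destruct Hst as [Hn _]. pose proof (Hn i k H H0).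
  assert (0 <= Idm i k) by (unfold Idm; destruct (Nat.eqb i k); lra).
  assert (0 <= (INR N - 2) / INR N) by (apply Rmult_le_pos; [lra| left; apply Rinv_0_lt_compat; lra]).
  assert (0 <= 2 / INR N) by (apply Rmult_le_pos; [lra| left; apply Rinv_0_lt_compat; lra]).
  nra. Qed.

Lemma P_row i : (i<N)%nat -> rsum N (fun k => Pm N Q i k) = 1.
Proof. intros. unfold Pm, mlin. rewrite rsum_lin.
  rewrite (rsum_ext _ _ (fun k => Idm i k * 1)) by (intros; ring). rewrite rsum_delta_l by auto.
  destruct Hst as [_ Hr]. rewrite Hr by auto. pose proof INR_N_pos. field. lra. Qed.

Lemma P_col k : (k<N)%nat -> rsum N (fun i => Pm N Q i k) = 1.
Proof. intros. unfold Pm, mlin. rewrite rsum_lin.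
  rewrite (rsum_ext _ _ (fun i => 1 * Idm i k)) by (intros; ring). rewrite rsum_delta_r by auto.
  rewrite Q_colsum by auto. pose proof INR_N_pos. field. lra. Qed.

Lemma fro_mmul_l D : fro N (mmul N (Pm N Q) D) <= fro N D.
Proof. unfold fro, mmul.
  apply Rle_trans with (rsum N (fun i => rsum N (fun j => rsum N (fun k => Pm N Q i k * D k j ^ 2)))).
  { apply rsum_le; intros; apply rsum_le; intros. apply jensen.
    intros; apply P_nonneg; auto. apply P_row; auto. }
  right. rewrite rsum_swap. rewrite (rsum_swap N N (fun i j => D i j ^ 2)). apply rsum_ext; intros j Hj.
  rewrite rsum_swap. apply rsum_ext; intros k Hk.
  rewrite (rsum_ext _ _ (fun i => D k j ^ 2 * Pm N Q i k)) by (intros; ring).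
  rewrite rsum_scal, P_col; auto; ring. Qed.

Lemma fro_mmul_r D : fro N (mmul N D (Pm N Q)) <= fro N D.
Proof. unfold fro, mmul.
  apply Rle_trans with (rsum N (fun i => rsum N (fun j => rsum N (fun k => Pm N Q k j * D i k ^ 2)))).
  { apply rsum_le; intros; apply rsum_le; intros.
    rewrite (rsum_ext _ _ (fun k => Pm N Q k i0 * D i k)) by (intros; ring). apply jensen.
    intros; apply P_nonneg; auto. apply P_col; auto. }
  right. apply rsum_ext; intros i Hi.
  rewrite rsum_swap. apply rsum_ext; intros k Hk.
  rewrite (rsum_ext _ _ (fun j => D i k ^ 2 * Pm N Q k j)) by (intros; ring).
  rewrite rsum_scal, P_row; auto; ring. Qed.

Lemma fro_Mop D : fro N (Mop N Q D) <= fro N D.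
Proof. pose proof (fro_mmul_l D). pose proof (fro_mmul_r D).
  apply Rle_trans with (/2 * fro N (mmul N (Pm N Q) D) + /2 * fro N (mmul N D (Pm N Q))); [|lra].
  unfold fro. rewrite <- rsum_lin. apply rsum_le; intros. rewrite <- rsum_lin. apply rsum_le; intros.
  unfold Mop. set (x := mmul N (Pm N Q) D i i0). set (y := mmul N D (Pm N Q) i i0). pose proof (pow2_ge_0 (x - y)). nra. Qed.

Lemma L0_decomp C i j : (i<N)%nat -> (j<N)%nat ->
  L0 N Q C i j = mtr N C / INR N * Idm i j + Mop N Q (Dm N C) i j.
Proof. intros Hi Hj. unfold Mop, Dm, Pm. rewrite mmul_mlin_l, !mmul_mlin_r, !mmul_mlin_l.
  rewrite !mmul_Idm_l, !mmul_Idm_r by auto. unfold L0. pose proof INR_N_pos.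
  unfold mlin. field. lra. Qed.

Lemma mtr_L0 C : mtr N (L0 N Q C) = mtr N C + mtr N (Mop N Q (Dm N C)).
Proof. unfold mtr at 1. rewrite (rsum_ext _ _ (fun i => mtr N C / INR N * Idm i i + Mop N Q (Dm N C) i i))
  by (intros; apply L0_decomp; auto).
  rewrite rsum_plus. rewrite (rsum_ext _ _ (fun i => mtr N C / INR N)) by (intros; rewrite Idm_same; ring).
  rewrite rsum_const. unfold mtr at 3. pose proof INR_N_pos. field. lra. Qed.

Lemma Dm_L0 C : eqN N (Dm N (L0 N Q C))
   (mlin 1 (Mop N Q (Dm N C)) (- (mtr N (Mop N Q (Dm N C)) / INR N)) Idm).
Proof. intros i j Hi Hj. unfold Dm at 1. unfold mlin. rewrite mtr_L0, L0_decomp by auto.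
  pose proof INR_N_pos. field. lra. Qed.

Lemma fro_sub_diag A : fro N (mlin 1 A (- (mtr N A / INR N)) Idm) <= fro N A.
Proof. set (c := mtr N A / INR N). unfold fro, mlin.
  rewrite (rsum_ext _ _ (fun i => rsum N (fun j => A i j ^ 2) + (c^2 - 2 * c * A i i))).
  2:{ intros i Hi. rewrite (rsum_ext _ _ (fun j => A i j ^ 2 + Idm i j * (c ^ 2 - 2 * c * A i j))).
      rewrite rsum_plus, rsum_delta_l by auto. auto.
      intros; unfold Idm; destruct (Nat.eqb i i0); ring. }
  rewrite rsum_plus. rewrite (rsum_ext N (fun i => c^2 - 2 * c * A i i) (fun i => 1 * c^2 + (-2*c) * A i i)) by (intros; ring).
  rewrite rsum_lin, rsum_const. fold (mtr N A). subst c. pose proof INR_N_pos.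
  assert (0 <= (mtr N A)^2 / INR N). { apply Rmult_le_pos. nra. left; apply Rinv_0_lt_compat; lra. }
  assert (INR N * 1 * (mtr N A / INR N) ^ 2 + -2 * (mtr N A / INR N) * mtr N A = - ((mtr N A)^2 / INR N)) by (field; lra).
  lra. Qed.

Lemma abs_sq x : Rabs x <= (1 + x ^ 2) / 2.
Proof. destruct (Rle_dec 0 x). rewrite Rabs_pos_eq by lra. pose proof (pow2_ge_0 (x-1)). nra.
rewrite Rabs_left by lra. pose proof (pow2_ge_0 (x+1)). nra. Qed.

Lemma tr_bound A : Rabs (mtr N A) <= (INR N + fro N A) / 2.
Proof. unfold mtr. eapply Rle_trans. apply rsum_abs.
  apply Rle_trans with (rsum N (fun i => /2 * 1 + /2 * rsum N (fun j => A i j ^ 2))).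
  { apply rsum_le. intros. eapply Rle_trans. apply abs_sq.
    pose proof (rsum_single_le N (fun j => A i j ^ 2) i). assert (A i i ^ 2 <= rsum N (fun j => A i j ^2)).
    apply H0; auto; intros; nra. lra. }
  rewrite rsum_lin, rsum_const. unfold fro. lra. Qed.

Lemma entry_bound C i j : (i<N)%nat -> (j<N)%nat ->
  Rabs (C i j) <= (1 + fro N (Dm N C)) / 2 + Rabs (mtr N C) / INR N.
Proof. intros. pose proof (fro_entry N (Dm N C) i j H H0). pose proof (abs_sq (Dm N C i j)).
  replace (C i j) with (Dm N C i j + mtr N C / INR N * Idm i j).
  2:{ unfold Dm, mlin. ring. }
  eapply Rle_trans. apply Rabs_triang. rewrite Rabs_mult.
  assert (Rabs (Idm i j) <= 1) by (unfold Idm; destruct (Nat.eqb i j); rewrite ?Rabs_R1, ?Rabs_R0; lra).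
  unfold Rdiv. rewrite Rabs_mult, (Rabs_pos_eq (/ INR N)).
  2:{ left; apply Rinv_0_lt_compat; apply INR_N_pos. }
  pose proof (Rabs_pos (mtr N C)). pose proof (Rabs_pos (Idm i j)).
  assert (0 < / INR N) by (apply Rinv_0_lt_compat; apply INR_N_pos).
  assert (Rabs (mtr N C) * / INR N * Rabs (Idm i j) <= Rabs (mtr N C) * / INR N * 1).
  { apply Rmult_le_compat_l; auto. nra. }
  lra. Qed.

Lemma L0pow_bound C : exists al be, 0 <= al /\ 0 <= be /\ forall n i j, (i<N)%nat -> (j<N)%nat ->
  Rabs (L0pow N Q n C i j) <= al + be * INR n.
Proof. set (F := fro N (Dm N C)). set (t0 := mtr N C).
  assert (HF : 0 <= F) by apply fro_nonneg.
  assert (Hind : forall n, fro N (Dm N (L0pow N Q n C)) <= F /\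
     Rabs (mtr N (L0pow N Q n C)) <= Rabs t0 + INR n * ((INR N + F) / 2)).
  { induction n.
    - split; [apply Rle_refl| simpl INR; rewrite Rmult_0_l, Rplus_0_r; apply Rle_refl].
    - destruct IHn as [H1 H2]. simpl L0pow. split.
      + rewrite (fro_eqN _ _ _ (Dm_L0 _)). eapply Rle_trans. apply fro_sub_diag.
        eapply Rle_trans. apply fro_Mop. auto.
      + rewrite mtr_L0. eapply Rle_trans. apply Rabs_triang. rewrite S_INR.
        pose proof (tr_bound (Mop N Q (Dm N (L0pow N Q n C)))).
        pose proof (fro_Mop (Dm N (L0pow N Q n C))). lra. }
  pose proof INR_N_pos.
  exists ((1 + F)/2 + Rabs t0 / INR N), ((INR N + F) / 2 / INR N).
  split. { pose proof (Rabs_pos t0). assert (0 <= Rabs t0 / INR N) by (apply Rmult_le_pos; [lra| left; apply Rinv_0_lt_compat; lra]). lra. }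
  split. { apply Rmult_le_pos; [lra| left; apply Rinv_0_lt_compat; lra]. }
  intros n i j Hi Hj. eapply Rle_trans. apply entry_bound; auto.
  destruct (Hind n) as [H1 H2].
  assert (Rabs (mtr N (L0pow N Q n C)) / INR N <= (Rabs t0 + INR n * ((INR N + F) / 2)) / INR N).
  { apply Rmult_le_compat_r; auto. left; apply Rinv_0_lt_compat; lra. }
  assert ((Rabs t0 + INR n * ((INR N + F) / 2)) / INR N = Rabs t0 / INR N + (INR N + F) / 2 / INR N * INR n) by (field; lra).
  lra. Qed.

End Bounds.

Lemma sum_f_rsum f n : sum_f_R0 f n = rsum (S n) f.
Proof. induction n; simpl; [ring| rewrite IHn; simpl; auto]. Qed.

Lemma geo_bound r al be : 0 < r < 1 -> 0 <= al -> 0 <= be ->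
  exists K rho, 0 <= K /\ 0 < rho < 1 /\ forall n, (al + be * INR n) * r ^ n <= K * rho ^ n.
Proof. intros Hr Hal Hbe. set (h := (1 - r) / (2 * r)).
  assert (Hh : 0 < h) by (unfold h; apply Rdiv_lt_0_compat; lra).
  exists (al + be / h), ((1 + h) * r). split.
  { assert (0 <= be / h) by (apply Rmult_le_pos; [lra| left; apply Rinv_0_lt_compat; lra]). lra. }
  assert (E : (1 + h) * r = (1 + r) / 2) by (unfold h; field; lra).
  split. rewrite E; lra.
  intros n. pose proof (poly n h Hh).
  assert (INR n <= (1 + h) ^ n / h).
  { apply Rmult_le_reg_r with h; auto. unfold Rdiv. rewrite Rmult_assoc, Rinv_l by lra. lra. }
  assert (r ^ n <= ((1 + h) * r) ^ n) by (apply pow_incr; nra).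
  rewrite Rpow_mult_distr in *.
  pose proof (pow_le r n (Rlt_le _ _ (proj1 Hr))).
  assert (0 <= (1 + h) ^ n) by (apply pow_le; lra).
  assert (be * INR n * r ^ n <= be * ((1 + h) ^ n / h) * r ^ n).
  { apply Rmult_le_compat_r; auto. apply Rmult_le_compat_l; auto. }
  assert (al * r ^ n <= al * ((1 + h) ^ n * r ^ n)) by (apply Rmult_le_compat_l; auto).
  assert (be * ((1 + h) ^ n / h) * r ^ n = be / h * ((1 + h) ^ n * r ^ n)) by (field; lra).
  lra. Qed.

Lemma rsum_pos n f : (0 < n)%nat -> (forall i, (i<n)%nat -> 0 < f i) -> 0 < rsum n f.
Proof. intros Hn H. eapply Rlt_le_trans. apply (H 0%nat Hn).
  apply rsum_single_le; auto. intros; left; auto. Qed.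

Lemma quad_le N Q v : stochastic N Q -> symmetric N Q ->
  rsum N (fun k => rsum N (fun l => Q k l * v k * v l)) <= rsum N (fun k => v k ^ 2).
Proof. intros [Hn Hr] Hs.
  apply Rle_trans with (rsum N (fun k => rsum N (fun l => /2 * (Q k l * v k ^ 2) + /2 * (Q k l * v l ^ 2)))).
  { apply rsum_le; intros; apply rsum_le; intros. pose proof (Hn i i0 H H0).
    pose proof (pow2_ge_0 (v i - v i0)). nra. }
  right. rewrite (rsum_ext N _ (fun k => /2 * rsum N (fun l => Q k l * v k ^ 2) + /2 * rsum N (fun l => Q k l * v l ^ 2)))
    by (intros; apply rsum_lin).
  rewrite rsum_lin. rewrite (rsum_swap N N (fun k l => Q k l * v l ^ 2)).
  rewrite (rsum_ext N _ (fun k => v k ^ 2)).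
  rewrite (rsum_ext N (fun l => rsum N (fun k => Q k l * v l ^ 2)) (fun k => v k ^ 2)). field.
  - intros l Hl. rewrite (rsum_ext _ _ (fun k => v l ^ 2 * Q l k)). rewrite rsum_scal, Hr; auto; ring.
    intros. rewrite Hs by auto. ring.
  - intros k Hk. rewrite (rsum_ext _ _ (fun l => v k ^ 2 * Q k l)) by (intros; ring).
    rewrite rsum_scal, Hr; auto; ring. Qed.

Lemma mmul_A_M N Q lam M i j : (i<N)%nat ->
  mmul N (Aλ lam Q) M i j = (lam + 2) * M i j - 2 * mmul N Q M i j.
Proof. intros. unfold mmul, Aλ.
  rewrite (rsum_ext _ _ (fun k => (lam+2) * (Idm i k * M k j) + (-2) * (Q i k * M k j))) by (intros; ring).
  rewrite rsum_lin, (rsum_delta_l N i (fun k => M k j)) by auto. ring. Qed.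

Lemma mmul_M_A N Q lam M i j : (j<N)%nat ->
  mmul N M (Aλ lam Q) i j = (lam + 2) * M i j - 2 * mmul N M Q i j.
Proof. intros. unfold mmul, Aλ.
  rewrite (rsum_ext _ _ (fun k => (lam+2) * (M i k * Idm k j) + (-2) * (M i k * Q k j))) by (intros; ring).
  rewrite rsum_lin, (rsum_delta_r N j (fun k => M i k)) by auto. ring. Qed.

Lemma trM_pos N Q lam M : (0 < N)%nat -> stochastic N Q -> symmetric N Q -> 0 < lam ->
  is_inverse N (Aλ lam Q) M -> 0 < mtr N M.
Proof. intros HN Hst Hsym Hl Hinv. apply rsum_pos; auto. intros i Hi.
  set (v := fun k => M k i).
  assert (E1 : rsum N (fun k => v k * mmul N (Aλ lam Q) M k i) = M i i).
  { rewrite (rsum_ext _ _ (fun k => M k i * Idm k i)). apply (rsum_delta_r N i (fun k => M k i)); auto.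
    intros. rewrite (proj1 (Hinv i0 i H Hi)). auto. }
  assert (E2 : rsum N (fun k => v k * mmul N (Aλ lam Q) M k i) =
     (lam + 2) * rsum N (fun k => v k ^ 2) + (-2) * rsum N (fun k => rsum N (fun l => Q k l * v k * v l))).
  { rewrite <- rsum_lin. apply rsum_ext; intros. rewrite mmul_A_M by auto.
    unfold mmul. rewrite (rsum_ext N (fun l => Q i0 l * v i0 * v l) (fun l => v i0 * (Q i0 l * M l i)))
      by (intros; unfold v; ring).
    rewrite rsum_scal. unfold v; ring. }  pose proof (quad_le N Q v Hst Hsym).
  assert (Hs : 0 <= rsum N (fun k => v k ^ 2)) by (apply rsum_nonneg; intros; apply pow2_ge_0).
  assert (Hvi : v i ^ 2 <= rsum N (fun k => v k ^ 2)) by (apply (rsum_single_le N (fun k => v k ^2)); auto; intros; apply pow2_ge_0).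
  assert (Hge : lam * rsum N (fun k => v k ^ 2) <= M i i) by lra.
  destruct (Rtotal_order 0 (M i i)) as [Hp|[Hz|Hneg]]; auto.
  - exfalso. assert (rsum N (fun k => v k ^ 2) = 0) by (rewrite <- Hz in Hge; nra).
    assert (Hv : forall k, (k<N)%nat -> v k = 0).
    { intros k Hk. assert (v k ^ 2 <= 0). { rewrite <- H0. apply (rsum_single_le N (fun k => v k ^2)); auto; intros; apply pow2_ge_0. }
      nra. }
    pose proof (proj1 (Hinv i i Hi Hi)). rewrite Idm_same in H1. unfold mmul in H1.
    rewrite (rsum_ext _ _ (fun _ => 0)) in H1. rewrite rsum_zero in H1. lra.
    intros k Hk. change (M k i) with (v k). rewrite Hv; auto; ring.
  - exfalso. subst v. simpl in Hvi. nra. Qed.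

From Coquelicot Require Import Coquelicot.

Theorem lemma4p1 (N : nat) (Q : Mat) (lam : R) (xi : nat -> bool) (M : Mat) :
  (8 < N)%nat ->
  stochastic N Q -> irreducible N Q -> symmetric N Q -> mtr N Q = 0 ->
  0 < lam ->
  is_inverse N (Aλ lam Q) M ->
  let a := fun n : nat =>
    (INR N / (INR N + lam)) ^ n * (/ INR N * Sxi N xi (L0pow N Q n (Jm N))) in
  (exists l, infinite_sum (fun n => Rabs (a n)) l) /\
  exists l, infinite_sum a l /\
    lam / (INR N + lam) * l =
    p1 N xi ^ 2
    + / INR N * Sxi N xi
        (fun i j => 2 * mmul N (fun x y => Idm x y - Q x y) M i j
                    / (lam * mtr N M)).
Proof.
  intros H8 Hst Hirr Hsym HtrQ Hlam Hinv a.
  assert (HN : (2 < N)%nat) by lia.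
  pose proof (INR_N_pos N HN) as HNp.
  assert (Htm : 0 < mtr N M) by (apply (trM_pos N Q lam M); auto; lia).
  set (tm := mtr N M) in *.
  set (T := lam * tm).
  assert (HT : 0 < T) by (unfold T; nra).
  assert (Hr : 0 < INR N / (INR N + lam) < 1).
  { split. apply Rdiv_lt_0_compat; lra. apply Rmult_lt_reg_r with (INR N + lam). lra.
    unfold Rdiv. rewrite Rmult_assoc, Rinv_l by lra. lra. }
  set (X := mlin 1 (Jm N) 1 (mlin (/ T) Idm (- lam / T) M)).
  assert (HMQ : forall i j, (i<N)%nat -> (j<N)%nat -> mmul N Q M i j = ((lam + 2) * M i j - Idm i j) / 2).
  { intros i j Hi Hj. pose proof (proj1 (Hinv i j Hi Hj)). rewrite mmul_A_M in H by auto. lra. }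
  assert (Hcomm : forall i j, (i<N)%nat -> (j<N)%nat -> mmul N M Q i j = mmul N Q M i j).
  { intros i j Hi Hj. pose proof (proj2 (Hinv i j Hi Hj)). rewrite mmul_M_A in H by auto.
    rewrite HMQ by auto. lra. }
  assert (L0J : forall i j, (i<N)%nat -> (j<N)%nat ->
     L0 N Q (Jm N) i j = / INR N + 2 * (Idm i j - Q i j) / INR N ^ 2).
  { intros i j Hi Hj. unfold L0.
    assert (E1 : mmul N (Jm N) Q i j = / INR N).
    { unfold mmul, Jm. rewrite rsum_scal, Q_colsum by auto. ring. }
    assert (E2 : mmul N Q (Jm N) i j = / INR N).
    { unfold mmul, Jm. rewrite (rsum_ext _ _ (fun k => / INR N * Q i k)) by (intros; ring).
      rewrite rsum_scal. destruct Hst as [_ Hrow]. rewrite Hrow by auto. ring. }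
    assert (E3 : mtr N (Jm N) = 1).
    { unfold mtr, Jm. rewrite rsum_const. field. lra. }
    rewrite E1, E2, E3. unfold Jm. field. lra. }
  assert (L0I : forall i j, (i<N)%nat -> (j<N)%nat -> L0 N Q Idm i j = Idm i j).
  { intros i j Hi Hj. unfold L0. rewrite mmul_Idm_l, mmul_Idm_r by auto.
    assert (E3 : mtr N Idm = INR N).
    { unfold mtr. rewrite (rsum_ext _ _ (fun _ => 1)) by (intros; apply Idm_same). rewrite rsum_const. ring. }
    rewrite E3. field. lra. }
  set (r := INR N / (INR N + lam)) in *.
  assert (Key : eqN N (mlin 1 X (- r) (L0 N Q X)) (mlin (lam / (INR N + lam)) (Jm N) 0 (Jm N))).
  { intros i j Hi Hj. unfold X. rewrite !L0_mlin. unfold mlin. rewrite L0J, L0I by auto.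
    unfold L0 at 1. rewrite Hcomm, HMQ by auto. fold tm. unfold Jm, r, T. field.
    repeat split; lra. }
  set (g := fun C => / INR N * Sxi N xi C).
  assert (Tele : forall K, lam / (INR N + lam) * rsum K a = g X - r ^ K * g (L0pow N Q K X)).
  { induction K.
    - simpl. unfold g. ring.
    - pose proof (Sxi_eqN N xi _ _ (L0pow_eqN N Q K _ _ Key)) as HK.
      rewrite !L0pow_mlin, !Sxi_mlin, L0pow_succ in HK.
      assert (E : lam / (INR N + lam) * Sxi N xi (L0pow N Q K (Jm N)) =
                  Sxi N xi (L0pow N Q K X) - r * Sxi N xi (L0pow N Q (S K) X)) by (rewrite Rmult_0_l, Rplus_0_r in HK; rewrite <- HK; ring).
      simpl rsum. change (a K) with (r ^ K * (/ INR N * Sxi N xi (L0pow N Q K (Jm N)))).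
      replace (lam / (INR N + lam) * (rsum K a + r ^ K * (/ INR N * Sxi N xi (L0pow N Q K (Jm N)))))
        with (lam / (INR N + lam) * rsum K a + r ^ K * / INR N * (lam / (INR N + lam) * Sxi N xi (L0pow N Q K (Jm N))))
        by ring.
      rewrite E, IHK. unfold g. simpl pow. ring. }
  destruct (L0pow_bound N Q HN Hst Hsym X) as [al [be [Hal [Hbe HbX]]]].
  destruct (L0pow_bound N Q HN Hst Hsym (Jm N)) as [al' [be' [Hal' [Hbe' HbJ]]]].
  destruct (geo_bound r al be Hr Hal Hbe) as [K [rho [HK [Hrho Hgeo]]]].
  destruct (geo_bound r al' be' Hr Hal' Hbe') as [K' [rho' [HK' [Hrho' Hgeo']]]].
  assert (gbound : forall C al be, (forall i j, (i<N)%nat -> (j<N)%nat -> Rabs (C i j) <= al + be) ->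
     Rabs (g C) <= INR N * (al + be)).
  { intros C a0 b0 Hb. unfold g. rewrite Rabs_mult, Rabs_pos_eq.
    2:{ left; apply Rinv_0_lt_compat; lra. }
    pose proof (Sxi_bound N xi C _ Hb).
    apply Rle_trans with (/ INR N * (INR N * (INR N * (a0 + b0)))).
    apply Rmult_le_compat_l; auto. left; apply Rinv_0_lt_compat; lra.
    right; field; lra. }
  assert (Hrn : forall n, 0 <= r ^ n) by (intros; apply pow_le; lra).
  split.
  - assert (Hex : ex_series (fun n => Rabs (a n))).
    { apply (@ex_series_le R_AbsRing R_CompleteNormedModule _ (fun n => INR N * K' * rho' ^ n)).
      + intros n. change (norm (Rabs (a n))) with (Rabs (Rabs (a n))). rewrite Rabs_Rabsolu.
        unfold a. fold r. rewrite Rabs_mult, (Rabs_pos_eq (r ^ n)) by auto.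
        pose proof (gbound _ _ _ (HbJ n)). fold (g (L0pow N Q n (Jm N))).
        pose proof (Hgeo' n).
        apply Rle_trans with (r ^ n * (INR N * (al' + be' * INR n))).
        apply Rmult_le_compat_l; auto.
        replace (r ^ n * (INR N * (al' + be' * INR n))) with (INR N * ((al' + be' * INR n) * r ^ n)) by ring.
        rewrite Rmult_assoc. apply Rmult_le_compat_l; lra.
      + apply (ex_series_ext (fun n => scal (INR N * K') (rho' ^ n))).
        intros; reflexivity.
        apply (@ex_series_scal_l R_AbsRing R_NormedModule). apply ex_series_geom. rewrite Rabs_pos_eq; lra. }
    destruct Hex as [l Hl]. exists l. apply is_series_Reals. auto.
  - exists ((INR N + lam) / lam * g X). split.
    + intros eps Heps.
      set (Cc := (INR N + lam) / lam * (INR N * K) + 1).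
      assert (HCc : 0 < Cc).
      { unfold Cc. assert (0 <= (INR N + lam) / lam * (INR N * K)).
        apply Rmult_le_pos. left; apply Rdiv_lt_0_compat; lra. nra. lra. }
      destruct (pow_lt_1_zero rho ltac:(rewrite Rabs_pos_eq; lra) (eps / Cc) ltac:(apply Rdiv_lt_0_compat; lra)) as [n0 Hn0].
      exists n0. intros n Hn. unfold R_dist. rewrite sum_f_rsum.
      pose proof (Tele (S n)) as HT1.
      assert (Ers : rsum (S n) a = (INR N + lam) / lam * (g X - r ^ S n * g (L0pow N Q (S n) X))).
      { rewrite <- HT1. field. lra. }
      rewrite Ers.
      replace ((INR N + lam) / lam * (g X - r ^ S n * g (L0pow N Q (S n) X)) - (INR N + lam) / lam * g X)
        with (- ((INR N + lam) / lam * (r ^ S n * g (L0pow N Q (S n) X)))) by ring.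
      rewrite Rabs_Ropp, Rabs_mult, Rabs_mult, (Rabs_pos_eq (r ^ S n)) by auto.
      rewrite Rabs_pos_eq by (left; apply Rdiv_lt_0_compat; lra).
      pose proof (gbound _ _ _ (HbX (S n))). pose proof (Hgeo (S n)).
      pose proof (Hn0 (S n) ltac:(lia)). rewrite Rabs_pos_eq in H1 by (apply pow_le; lra).
      assert (r ^ S n * Rabs (g (L0pow N Q (S n) X)) <= INR N * (K * rho ^ S n)).
      { apply Rle_trans with (r ^ S n * (INR N * (al + be * INR (S n)))).
        apply Rmult_le_compat_l; auto.
        replace (r ^ S n * (INR N * (al + be * INR (S n)))) with (INR N * ((al + be * INR (S n)) * r ^ S n)) by ring.
        apply Rmult_le_compat_l; lra. }
      assert (Hpos : 0 < (INR N + lam) / lam) by (apply Rdiv_lt_0_compat; lra).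
      apply Rle_lt_trans with ((INR N + lam) / lam * (INR N * (K * rho ^ S n))).
      apply Rmult_le_compat_l; lra.
      assert (0 <= rho ^ S n) by (apply pow_le; lra).
      apply Rle_lt_trans with (Cc * rho ^ S n).
      { unfold Cc. nra. }
      apply Rlt_le_trans with (Cc * (eps / Cc)). apply Rmult_lt_compat_l; auto.
      right; field; lra.
    + replace (lam / (INR N + lam) * ((INR N + lam) / lam * g X)) with (g X) by (field; lra).
      unfold g, X. rewrite Sxi_mlin.
      assert (EJ : Sxi N xi (Jm N) = INR N * p1 N xi ^ 2).
      { unfold Sxi, Jm, p1. set (B := rsum N (fun x => b2R (xi x))).
        rewrite (rsum_ext _ _ (fun x => (b2R (xi x) * / INR N) * B)).
        rewrite (rsum_ext _ _ (fun x => (/ INR N * B) * b2R (xi x))) by (intros; ring).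
        rewrite rsum_scal. fold B. field. lra.
        intros x Hx. unfold B. rewrite <- rsum_scal. apply rsum_ext; intros; ring. }
      rewrite EJ.
      assert (EY : Sxi N xi (mlin (/ T) Idm (- lam / T) M) =
        Sxi N xi (fun i j => 2 * mmul N (fun x y => Idm x y - Q x y) M i j / T)).
      { apply Sxi_eqN. intros i j Hi Hj. unfold mlin.
        assert (mmul N (fun x y => Idm x y - Q x y) M i j = M i j - mmul N Q M i j).
        { unfold mmul. rewrite (rsum_ext _ _ (fun k => 1 * (Idm i k * M k j) + (-1) * (Q i k * M k j))) by (intros; ring).
          rewrite rsum_lin, (rsum_delta_l N i (fun k => M k j)) by auto. ring. }
        rewrite H, HMQ by auto. unfold T. field. lra. }
      rewrite EY. field. lra.
Qed.
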